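(* Let $(X,\mathbb{A},d)$ be a complete $C^*$-algebra valued metric space, where $\mathbb{A}$ is a unital $C^*$-algebra. Let $T,S:X\to X$ be mappings such that $$d(T^n x,(ST)^n y)\preceq q(x,y)^n\,\delta(x,y)\quad\text{for all }x,y\in X,\ n\in\mathbb{N},$$ where $q:X\times X\to\acute{\mathbb{A}}_+$ satisfies $0\le\|q(x,y)\|<1$ for all $x,y\in X$ and $\delta:X\times X\to\mathbb{A}_+$ is a mapping, and $ST$ denotes the composition $S\circ T$. If $T$ and $ST$ are both orbitally continuous on $X$, then $T$ and $S$ have a unique common fixed point in $X$.
   Context: $\mathbb{A}$ denotes a unital $C^*$-algebra with unit $I$ and zero $\theta$. An element $a\in\mathbb{A}$ is positive, written $a\succeq\theta$, if $a^*=a$ and its spectrum is contained in $[0,\infty)$; $\mathbb{A}_+$ is the set of positive elements, and $a\succeq b$ means $a-b\succeq\theta$. $\acute{\mathbb{A}}_+$ denotes the set of positive elements of $\mathbb{A}$ that commute with every element of $\mathbb{A}$. A $C^*$-algebra valued metric space $(X,\mathbb{A},d)$ is a nonempty set $X$ with $d:X\times X\to\mathbb{A}$ such that for all $x,y,z\in X$: $d(x,y)\succeq\theta$, with $d(x,y)=\theta$ iff $x=y$; $d(x,y)=d(y,x)$; $d(x,y)\preceq d(x,z)+d(z,y)$. A sequence $\{x_n\}$ converges to $x$ if $\|d(x_n,x)\|\to0$, and is Cauchy if $\|d(x_n,x_m)\|\to0$ as $n,m\to\infty$; the space is complete if every Cauchy sequence converges to a point of $X$. A self-map $T$ of $X$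 is orbitally continuous at $u\in X$ if for every $x\in X$ and every increasing sequence of positive integers $\{n_i\}$, $\|d(T^{n_i}x,u)\|\to0$ implies $\|d(T^{n_i+1}x,Tu)\|\to0$ as $i\to\infty$; $T$ is orbitally continuous on $X$ if it is orbitally continuous at every $u\in X$. *)

(* Defs.v *)
From Stdlib Require Import Reals Lra.
Open Scope R_scope.

Definition C : Type := (R * R)%type.
Definition Cre (z : C) : R := fst z.
Definition Cim (z : C) : R := snd z.
Definition C1 : C := (1, 0).
Definition Cadd (z w : C) : C := (fst z + fst w, snd z + snd w).
Definition Cmul (z w : C) : C :=
  (fst z * fst w - snd z * snd w, fst z * snd w + snd z * fst w).
Definition Cconj (z : C) : C := (fst z, - snd z).
Definition Cmod (z : C) : R := sqrt (fst z * fst z + snd z * snd z).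

Record CstarAlg := {
  car :> Type;
  czero : car;
  cone : car;
  cadd : car -> car -> car;
  copp : car -> car;
  cmul : car -> car -> car;
  csmul : C -> car -> car;
  cstar : car -> car;
  cnorm : car -> R;
  cadd_assoc : forall a b c, cadd a (cadd b c) = cadd (cadd a b) c;
  cadd_comm : forall a b, cadd a b = cadd b a;
  cadd_0l : forall a, cadd czero a = a;
  cadd_oppl : forall a, cadd (copp a) a = czero;
  csmul_addl : forall (z w : C) a, csmul (Cadd z w) a = cadd (csmul z a) (csmul w a);
  csmul_addr : forall (z : C) a b, csmul z (cadd a b) = cadd (csmul z a) (csmul z b);
  csmul_mul : forall (z w : C) a, csmul (Cmul z w) a = csmul z (csmul w a);
  csmul_1 : forall a, csmul C1 a = a;
  cmul_assoc : forall a b c, cmul a (cmul b c) = cmul (cmul a b) c;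
  cmul_1l : forall a, cmul cone a = a;
  cmul_1r : forall a, cmul a cone = a;
  cmul_addl : forall a b c, cmul (cadd a b) c = cadd (cmul a c) (cmul b c);
  cmul_addr : forall a b c, cmul a (cadd b c) = cadd (cmul a b) (cmul a c);
  cmul_smull : forall (z : C) a b, cmul (csmul z a) b = csmul z (cmul a b);
  cmul_smulr : forall (z : C) a b, cmul a (csmul z b) = csmul z (cmul a b);
  cstar_add : forall a b, cstar (cadd a b) = cadd (cstar a) (cstar b);
  cstar_smul : forall (z : C) a, cstar (csmul z a) = csmul (Cconj z) (cstar a);
  cstar_mul : forall a b, cstar (cmul a b) = cmul (cstar b) (cstar a);
  cstar_invol : forall a, cstar (cstar a) = a;
  cnorm_eq0 : forall a, cnorm a = 0 -> a = czero;
  cnorm_triangle : forall a b, cnorm (cadd a b) <= cnorm a + cnorm b;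
  cnorm_smul : forall (z : C) a, cnorm (csmul z a) = Cmod z * cnorm a;
  cnorm_mul : forall a b, cnorm (cmul a b) <= cnorm a * cnorm b;
  cnorm_cstar : forall a, cnorm (cmul (cstar a) a) = cnorm a * cnorm a;
  ccomplete : forall u : nat -> car,
    (forall eps, eps > 0 -> exists N, forall n m, (n >= N)%nat -> (m >= N)%nat ->
        cnorm (cadd (u n) (copp (u m))) < eps) ->
    exists l, forall eps, eps > 0 -> exists N, forall n, (n >= N)%nat ->
        cnorm (cadd (u n) (copp l)) < eps
}.

Arguments czero {_}. Arguments cone {_}. Arguments cadd {_}. Arguments copp {_}.
Arguments cmul {_}. Arguments csmul {_}. Arguments cstar {_}. Arguments cnorm {_}.

Section CstarDefs.
Variable A : CstarAlg.

Definition csub (a b : A) : A := cadd a (copp b).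

Definition cinvertible (a : A) : Prop :=
  exists b : A, cmul a b = cone /\ cmul b a = cone.

Definition in_spectrum (a : A) (l : C) : Prop :=
  ~ cinvertible (csub a (csmul l cone)).

Definition cpos (a : A) : Prop :=
  cstar a = a /\ forall l : C, in_spectrum a l -> Cim l = 0 /\ 0 <= Cre l.

Definition cle (a b : A) : Prop := cpos (csub b a).

(** positive elements commuting with every element (the set \acute{A}_+) *)
Definition cpos_central (a : A) : Prop :=
  cpos a /\ forall b : A, cmul a b = cmul b a.

Fixpoint cpow (a : A) (n : nat) : A :=
  match n with O => cone | S k => cmul a (cpow a k) end.

End CstarDefs.

Arguments csub {_}. Arguments cinvertible {_}. Arguments in_spectrum {_}.
Arguments cpos {_}. Arguments cle {_}. Arguments cpos_central {_}. Arguments cpow {_}.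

Definition is_cmetric (A : CstarAlg) (X : Type) (d : X -> X -> A) : Prop :=
  (forall x y, cpos (d x y)) /\
  (forall x y, d x y = czero <-> x = y) /\
  (forall x y, d x y = d y x) /\
  (forall x y z, cle (d x y) (cadd (d x z) (d z y))).

Definition cm_converges {A : CstarAlg} {X : Type} (d : X -> X -> A)
  (u : nat -> X) (x : X) : Prop :=
  Un_cv (fun n => cnorm (d (u n) x)) 0.

Definition cm_cauchy {A : CstarAlg} {X : Type} (d : X -> X -> A)
  (u : nat -> X) : Prop :=
  forall eps, eps > 0 -> exists N, forall n m, (n >= N)%nat -> (m >= N)%nat ->
    cnorm (d (u n) (u m)) < eps.

Definition cm_complete {A : CstarAlg} {X : Type} (d : X -> X -> A) : Prop :=
  forall u : nat -> X, cm_cauchy d u -> exists x, cm_converges d u x.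

Definition orbitally_continuous_at {A : CstarAlg} {X : Type} (d : X -> X -> A)
  (T : X -> X) (u : X) : Prop :=
  forall (x : X) (ni : nat -> nat),
    (forall i, (ni i < ni (S i))%nat) ->
    Un_cv (fun i => cnorm (d (Nat.iter (ni i) T x) u)) 0 ->
    Un_cv (fun i => cnorm (d (Nat.iter (S (ni i)) T x) (T u))) 0.

Definition orbitally_continuous {A : CstarAlg} {X : Type} (d : X -> X -> A)
  (T : X -> X) : Prop :=
  forall u, orbitally_continuous_at d T u.

(* Main.v *)
From Stdlib Require Import Reals Lra Lia Classical ClassicalEpsilon.
From Coquelicot Require Compactness.
Require Import Defs.
Open Scope R_scope.
Arguments cadd_assoc {_}.
Arguments cadd_comm {_}.
Arguments cadd_0l {_}.
Arguments cadd_oppl {_}.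
Arguments csmul_addl {_}.
Arguments csmul_addr {_}.
Arguments csmul_mul {_}.
Arguments csmul_1 {_}.
Arguments cmul_assoc {_}.
Arguments cmul_1l {_}.
Arguments cmul_1r {_}.
Arguments cmul_addl {_}.
Arguments cmul_addr {_}.
Arguments cmul_smull {_}.
Arguments cmul_smulr {_}.
Arguments cstar_add {_}.
Arguments cstar_smul {_}.
Arguments cstar_mul {_}.
Arguments cstar_invol {_}.
Arguments cnorm_eq0 {_}.
Arguments cnorm_triangle {_}.
Arguments cnorm_smul {_}.
Arguments cnorm_mul {_}.
Arguments cnorm_cstar {_}.
Arguments ccomplete {_}.

Definition Cmk (r : R) : C := (r, 0).
Definition Copp (z : C) : C := (- fst z, - snd z).
Definition Csub (z w : C) : C := Cadd z (Copp w).
Definition Cinv (z : C) : C :=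
  (fst z / (fst z * fst z + snd z * snd z), - snd z / (fst z * fst z + snd z * snd z)).
Fixpoint Cpow (z : C) (n : nat) : C := match n with O => C1 | S k => Cmul z (Cpow z k) end.

Lemma Cpair_eq (a b c d : R) : a = c -> b = d -> (a, b) = (c, d).
Proof. intros -> ->; reflexivity. Qed.

Lemma Cmod_ge0 z : 0 <= Cmod z.
Proof. unfold Cmod; apply sqrt_pos. Qed.

Lemma Cmod_sq z : Cmod z * Cmod z = fst z * fst z + snd z * snd z.
Proof. unfold Cmod; apply sqrt_sqrt; nra. Qed.

Lemma Cmod_mk r : Cmod (Cmk r) = Rabs r.
Proof. unfold Cmod, Cmk; simpl. rewrite <- sqrt_Rsqr_abs. f_equal. unfold Rsqr; ring. Qed.

Lemma Cmod_unique z m : 0 <= m -> m * m = fst z * fst z + snd z * snd z -> Cmod z = m.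
Proof. intros Hm Hsq. unfold Cmod. rewrite <- Hsq. apply sqrt_square; auto. Qed.

Lemma Cmod_mul z w : Cmod (Cmul z w) = Cmod z * Cmod w.
Proof.
  apply Cmod_unique.
  - apply Rmult_le_pos; apply Cmod_ge0.
  - replace (Cmod z * Cmod w * (Cmod z * Cmod w)) with ((Cmod z * Cmod z) * (Cmod w * Cmod w)) by ring.
    rewrite !Cmod_sq. destruct z, w; simpl; ring.
Qed.

Lemma Cmod_opp z : Cmod (Copp z) = Cmod z.
Proof. unfold Cmod, Copp; simpl. f_equal. ring. Qed.

Lemma Cmod_eq0 z : Cmod z = 0 -> z = (0, 0).
Proof.
  intro H. pose proof (Cmod_sq z) as Hs. rewrite H in Hs. destruct z as [x y]; simpl in *.
  apply Cpair_eq; nra.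
Qed.

Lemma Cmod_pos z : z <> (0,0) -> 0 < Cmod z.
Proof. intro H. destruct (Cmod_ge0 z) as [h|h]; auto. symmetry in h. apply Cmod_eq0 in h. contradiction. Qed.

Lemma Cmod_triangle z w : Cmod (Cadd z w) <= Cmod z + Cmod w.
Proof.
  apply Rsqr_incr_0_var.
  2:{ pose proof (Cmod_ge0 z); pose proof (Cmod_ge0 w); lra. }
  unfold Rsqr. pose proof (Cmod_sq (Cadd z w)) as H1. rewrite H1.
  replace ((Cmod z + Cmod w) * (Cmod z + Cmod w)) with (Cmod z * Cmod z + Cmod w * Cmod w + 2 * (Cmod z * Cmod w)) by ring.
  rewrite !Cmod_sq. destruct z as [a b], w as [c d]; simpl.
  pose proof (sqrt_cauchy a b c d) as Hc. unfold Cmod in *; simpl in *. unfold Rsqr in Hc.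
  nra.
Qed.

Lemma Cmod_C1 : Cmod C1 = 1.
Proof. apply Cmod_unique; simpl; lra. Qed.
Lemma Cmul_C1l z : Cmul C1 z = z.
Proof. destruct z; unfold Cmul, C1; simpl; apply Cpair_eq; ring. Qed.
Lemma Cmul_comm z w : Cmul z w = Cmul w z.
Proof. destruct z, w; unfold Cmul; simpl; apply Cpair_eq; ring. Qed.
Lemma Cmul_assoc z w v : Cmul z (Cmul w v) = Cmul (Cmul z w) v.
Proof. destruct z, w, v; unfold Cmul; simpl; apply Cpair_eq; ring. Qed.
Lemma Cmul_inv z : z <> (0,0) -> Cmul z (Cinv z) = C1.
Proof.
  intro H. destruct z as [x y]. assert (x * x + y * y <> 0).
  { intro E. apply H. apply Cpair_eq; nra. }
  unfold Cmul, Cinv, C1; simpl. apply Cpair_eq; field; auto.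
Qed.
Lemma Cmod_inv z : z <> (0,0) -> Cmod (Cinv z) = / Cmod z.
Proof.
  intro H. pose proof (Cmod_pos z H).
  assert (Cmod z * Cmod (Cinv z) = 1). { rewrite <- Cmod_mul, Cmul_inv by auto. exact Cmod_C1. }
  field_simplify_eq; lra.
Qed.

Section Alg.
Context {A : CstarAlg}.
Implicit Types a b c x y : A.

Lemma cadd_0r a : cadd a czero = a.
Proof. rewrite cadd_comm; apply cadd_0l. Qed.
Lemma cadd_oppr a : cadd a (copp a) = czero.
Proof. rewrite cadd_comm; apply cadd_oppl. Qed.
Lemma cadd_cancel_l c a b : cadd c a = cadd c b -> a = b.
Proof.
  intro H. rewrite <- (cadd_0l a), <- (cadd_0l b), <- (cadd_oppl c), <- !cadd_assoc, H; reflexivity.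
Qed.
Lemma opp_unique a b : cadd a b = czero -> b = copp a.
Proof. intro H. apply (cadd_cancel_l a). rewrite H, cadd_oppr; reflexivity. Qed.
Lemma copp_opp a : copp (copp a) = a.
Proof. symmetry; apply opp_unique, cadd_oppl. Qed.
Lemma csub_eq0 a b : csub a b = czero -> a = b.
Proof.
  unfold csub; intro H. pose proof (opp_unique _ _ H) as E.
  rewrite <- (copp_opp a), <- E, copp_opp; reflexivity.
Qed.
Lemma copp_add a b : copp (cadd a b) = cadd (copp a) (copp b).
Proof.
  symmetry; apply opp_unique.
  rewrite (cadd_comm (copp a)), cadd_assoc, <- (cadd_assoc a b), cadd_oppr, cadd_0r, cadd_oppr; reflexivity.
Qed.
Lemma copp_0 : copp (@czero A) = czero.
Proof. symmetry; apply opp_unique, cadd_0l. Qed.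
Lemma csub_diag a : csub a a = czero.
Proof. apply cadd_oppr. Qed.
Lemma cmul_0l a : cmul czero a = czero.
Proof.
  apply (cadd_cancel_l (cmul czero a)). rewrite <- cmul_addl, cadd_0l, cadd_0r; reflexivity.
Qed.
Lemma cmul_0r a : cmul a czero = czero.
Proof.
  apply (cadd_cancel_l (cmul a czero)). rewrite <- cmul_addr, cadd_0l, cadd_0r; reflexivity.
Qed.
Lemma cmul_oppl a b : cmul (copp a) b = copp (cmul a b).
Proof. apply opp_unique. rewrite <- cmul_addl, cadd_oppr, cmul_0l; reflexivity. Qed.
Lemma cmul_oppr a b : cmul a (copp b) = copp (cmul a b).
Proof. apply opp_unique. rewrite <- cmul_addr, cadd_oppr, cmul_0r; reflexivity. Qed.
Lemma cmul_subl a b c : cmul (csub a b) c = csub (cmul a c) (cmul b c).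
Proof. unfold csub; rewrite cmul_addl, cmul_oppl; reflexivity. Qed.
Lemma cmul_subr a b c : cmul a (csub b c) = csub (cmul a b) (cmul a c).
Proof. unfold csub; rewrite cmul_addr, cmul_oppr; reflexivity. Qed.

Lemma csmul_0 a : csmul (0,0) a = czero.
Proof.
  apply (cadd_cancel_l (csmul (0,0) a)). rewrite <- csmul_addl, cadd_0r.
  f_equal. unfold Cadd; simpl; apply Cpair_eq; ring.
Qed.
Lemma csmul_z0 z : csmul z (@czero A) = czero.
Proof.
  apply (cadd_cancel_l (csmul z czero)). rewrite <- csmul_addr, !cadd_0r; reflexivity.
Qed.
Lemma csmul_Copp z a : csmul (Copp z) a = copp (csmul z a).
Proof.
  apply opp_unique. rewrite <- csmul_addl.
  replace (Cadd z (Copp z)) with ((0,0) : C) by (unfold Cadd, Copp; simpl; apply Cpair_eq; ring).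
  apply csmul_0.
Qed.
Lemma csmul_m1 a : csmul (Cmk (-1)) a = copp a.
Proof.
  replace (Cmk (-1)) with (Copp C1) by (unfold Copp, Cmk, C1; simpl; apply Cpair_eq; ring).
  rewrite csmul_Copp, csmul_1; reflexivity.
Qed.
Lemma csmul_copp z a : csmul z (copp a) = copp (csmul z a).
Proof. apply opp_unique. rewrite <- csmul_addr, cadd_oppr, csmul_z0; reflexivity. Qed.
Lemma csmul_sub z a b : csmul z (csub a b) = csub (csmul z a) (csmul z b).
Proof. unfold csub; rewrite csmul_addr, csmul_copp; reflexivity. Qed.
Lemma csmul_subl z w a : csmul (Csub z w) a = csub (csmul z a) (csmul w a).
Proof. unfold Csub, csub; rewrite csmul_addl, csmul_Copp; reflexivity. Qed.

Lemma cnorm_0 : cnorm (@czero A) = 0.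
Proof.
  rewrite <- (csmul_0 czero), cnorm_smul.
  replace (Cmod (0,0)) with 0 by (symmetry; apply Cmod_unique; simpl; lra). ring.
Qed.
Lemma cnorm_opp a : cnorm (copp a) = cnorm a.
Proof. rewrite <- csmul_m1, cnorm_smul, Cmod_mk. replace (Rabs (-1)) with 1 by (rewrite Rabs_left; lra). ring. Qed.
Lemma cnorm_ge0 a : 0 <= cnorm a.
Proof.
  pose proof (cnorm_triangle a (copp a)). rewrite cadd_oppr, cnorm_0, cnorm_opp in H. lra.
Qed.
Lemma cnorm_csub_sym a b : cnorm (csub a b) = cnorm (csub b a).
Proof.
  rewrite <- cnorm_opp. unfold csub. rewrite copp_add, copp_opp, cadd_comm; reflexivity.
Qed.
Lemma cnorm_small a : (forall eps, eps > 0 -> cnorm a <= eps) -> a = czero.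
Proof.
  intro H. apply cnorm_eq0. pose proof (cnorm_ge0 a).
  destruct H0 as [h|h]; auto. specialize (H (cnorm a / 2)). lra.
Qed.
Lemma cnorm_sub_le a b : cnorm (csub a b) <= cnorm a + cnorm b.
Proof. unfold csub. rewrite <- (cnorm_opp b). apply cnorm_triangle. Qed.
Lemma cnorm_mul3 a b c : cnorm (cmul a (cmul b c)) <= cnorm a * cnorm b * cnorm c.
Proof.
  eapply Rle_trans; [apply cnorm_mul|]. rewrite Rmult_assoc.
  apply Rmult_le_compat_l; [apply cnorm_ge0| apply cnorm_mul].
Qed.

Lemma cstar_one : cstar (@cone A) = cone.
Proof.
  assert (L : forall a, cmul (cstar cone) a = a).
  { intro a. rewrite <- (cstar_invol a) at 1. rewrite <- cstar_mul, cmul_1r, cstar_invol; reflexivity. }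
  rewrite <- (cmul_1r (cstar cone)). apply L.
Qed.
Lemma cnorm_one : cnorm (@cone A) <= 1.
Proof.
  pose proof (cnorm_cstar (@cone A)). rewrite cstar_one, cmul_1l in H.
  pose proof (cnorm_ge0 (@cone A)). nra.
Qed.
Lemma cstar_0 : cstar (@czero A) = czero.
Proof.
  apply (cadd_cancel_l (cstar czero)). rewrite <- cstar_add, !cadd_0r; reflexivity.
Qed.
Lemma cstar_opp a : cstar (copp a) = copp (cstar a).
Proof. apply opp_unique. rewrite <- cstar_add, cadd_oppr, cstar_0; reflexivity. Qed.
Lemma cstar_sub a b : cstar (csub a b) = csub (cstar a) (cstar b).
Proof. unfold csub; rewrite cstar_add, cstar_opp; reflexivity. Qed.
Lemma cstar_real r : cstar (csmul (Cmk r) (@cone A)) = csmul (Cmk r) cone.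
Proof.
  rewrite cstar_smul, cstar_one. f_equal. unfold Cconj, Cmk; simpl; apply Cpair_eq; ring.
Qed.

Lemma cinv_one : cinvertible (@cone A).
Proof. exists cone; rewrite cmul_1l; auto. Qed.
Lemma cinv_mul a b : cinvertible a -> cinvertible b -> cinvertible (cmul a b).
Proof.
  intros [a' [Ha1 Ha2]] [b' [Hb1 Hb2]]. exists (cmul b' a'). split.
  - rewrite <- cmul_assoc, (cmul_assoc b b' a'), Hb1, cmul_1l; auto.
  - rewrite <- cmul_assoc, (cmul_assoc a' a b), Ha2, cmul_1l; auto.
Qed.
Lemma cinv_opp a : cinvertible a -> cinvertible (copp a).
Proof.
  intros [a' [H1 H2]]. exists (copp a'). rewrite cmul_oppl, cmul_oppr, copp_opp, cmul_oppr, cmul_oppl, copp_opp; auto.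
Qed.
Lemma cinv_smul z a : z <> (0,0) -> cinvertible a -> cinvertible (csmul z a).
Proof.
  intros Hz [a' [H1 H2]]. exists (csmul (Cinv z) a'). rewrite cmul_smull, cmul_smulr, <- csmul_mul, H1.
  rewrite cmul_smull, cmul_smulr, <- csmul_mul, H2. rewrite Cmul_inv by auto.
  rewrite Cmul_comm, Cmul_inv by auto. rewrite csmul_1. auto.
Qed.
Lemma inv_unique a b c : cmul a b = cone -> cmul c a = cone -> b = c.
Proof.
  intros H1 H2. rewrite <- (cmul_1l b), <- H2, <- cmul_assoc, H1, cmul_1r; reflexivity.
Qed.

End Alg.

Section Neumann.
Context {A : CstarAlg}.
Implicit Types a b c x y : A.

Lemma csub_tele a b c : cadd (csub a b) (csub b c) = csub a c.
Proof.
  unfold csub. rewrite cadd_assoc, <- (cadd_assoc a (copp b) b), cadd_oppl, cadd_0r; reflexivity.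
Qed.
Lemma csub_addl a b c : csub (cadd a b) c = cadd (csub a c) b.
Proof.
  unfold csub. rewrite <- !cadd_assoc, (cadd_comm b); reflexivity.
Qed.
Lemma cadd_csub a b : cadd (csub a b) b = a.
Proof. unfold csub. rewrite <- cadd_assoc, cadd_oppl, cadd_0r; reflexivity. Qed.
Lemma csub_cadd a b : csub (cadd a b) b = a.
Proof. unfold csub. rewrite <- cadd_assoc, cadd_oppr, cadd_0r; reflexivity. Qed.
Lemma csub_0r a : csub a czero = a.
Proof. unfold csub; rewrite copp_0, cadd_0r; reflexivity. Qed.

Lemma cpow_comm x n : cmul (cpow x n) x = cmul x (cpow x n).
Proof.
  induction n; simpl. rewrite cmul_1l, cmul_1r; auto.
  rewrite <- cmul_assoc, IHn; reflexivity.
Qed.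
Lemma cpow_norm x n : cnorm (cpow x n) <= cnorm x ^ n.
Proof.
  induction n; simpl. apply cnorm_one.
  eapply Rle_trans; [apply cnorm_mul|]. apply Rmult_le_compat_l; auto. apply cnorm_ge0.
Qed.
Lemma cpow_add x n m : cpow x (n + m) = cmul (cpow x n) (cpow x m).
Proof.
  induction n; simpl. rewrite cmul_1l; auto. rewrite IHn, cmul_assoc; auto.
Qed.

Fixpoint gsum x n : A := match n with O => czero | S k => cadd (gsum x k) (cpow x k) end.

Lemma gsum_l x n : cmul (csub cone x) (gsum x n) = csub cone (cpow x n).
Proof.
  induction n; simpl. rewrite cmul_0r, csub_diag; auto.
  rewrite cmul_addr, IHn, cmul_subl, cmul_1l, csub_tele; auto.
Qed.
Lemma gsum_r x n : cmul (gsum x n) (csub cone x) = csub cone (cpow x n).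
Proof.
  induction n; simpl. rewrite cmul_0l, csub_diag; auto.
  rewrite cmul_addl, IHn, cmul_subr, cmul_1r, cpow_comm, csub_tele; auto.
Qed.

Lemma gsum_diff x n p :
  cnorm x < 1 ->
  cnorm (csub (gsum x (p + n)) (gsum x n)) <= cnorm x ^ n * (1 - cnorm x ^ p) / (1 - cnorm x).
Proof.
  intro Hx. pose proof (cnorm_ge0 x). induction p; simpl.
  - rewrite csub_diag, cnorm_0. replace (1 - 1) with 0 by ring. unfold Rdiv; rewrite Rmult_0_r, Rmult_0_l; lra.
  - rewrite csub_addl. eapply Rle_trans; [apply cnorm_triangle|].
    eapply Rle_trans; [apply Rplus_le_compat; [apply IHp|apply cpow_norm]|].
    rewrite pow_add. right. field. lra.
Qed.

Lemma gsum_norm x n : cnorm x < 1 -> cnorm (gsum x n) <= 1 / (1 - cnorm x).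
Proof.
  intro Hx. pose proof (gsum_diff x 0 n Hx). rewrite Nat.add_0_r in H. simpl in H.
  rewrite csub_0r in H. eapply Rle_trans; [apply H|].
  pose proof (cnorm_ge0 x). pose proof (pow_le _ n H0).
  unfold Rdiv. apply Rmult_le_compat_r. left; apply Rinv_0_lt_compat; lra. lra.
Qed.

Lemma le_eps r s : (forall eps, eps > 0 -> r <= s + eps) -> r <= s.
Proof.
  intro H. destruct (Rle_dec r s); auto. specialize (H ((r - s)/2)). lra.
Qed.

Lemma neumann x : cnorm x < 1 ->
  exists w, cmul (csub cone x) w = cone /\ cmul w (csub cone x) = cone /\ cnorm w <= 1 / (1 - cnorm x).
Proof.
  intro Hx. set (r := cnorm x). assert (Hr : 0 <= r) by apply cnorm_ge0. assert (Hx' : r < 1) by exact Hx.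
  assert (Hpow : forall eps, eps > 0 -> exists N, forall n, (n >= N)%nat -> r ^ n < eps).
  { intros eps He. assert (Ha : Rabs r < 1) by (rewrite Rabs_right; lra).
    destruct (pow_lt_1_zero r Ha eps He) as [N HN].
    exists N; intros n Hn. specialize (HN n Hn). rewrite Rabs_right in HN; auto. apply Rle_ge, pow_le; lra. }
  destruct (ccomplete (gsum x)) as [l Hl].
  { intros eps He. destruct (Hpow (eps * (1 - r))) as [N HN]. apply Rmult_lt_0_compat; lra.
    exists N. intros n m Hn Hm.
    assert (G : forall n m, (n >= N)%nat -> (m >= n)%nat -> cnorm (csub (gsum x m) (gsum x n)) < eps).
    { clear n m Hn Hm. intros n m Hn Hm. replace m with ((m - n) + n)%nat by lia.
      eapply Rle_lt_trans; [apply gsum_diff; auto|]. specialize (HN n Hn).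
      pose proof (pow_le r (m-n) Hr).
      apply (Rmult_lt_reg_r (1 - r)). lra. unfold Rdiv. rewrite Rmult_assoc, Rinv_l by lra.
      assert (r ^ n * (1 - r ^ (m - n)) <= r ^ n). { pose proof (pow_le r n Hr). nra. }
      fold r. lra. }
    destruct (Nat.le_ge_cases n m).
    - fold (csub (gsum x n) (gsum x m)). rewrite cnorm_csub_sym. apply G; lia.
    - apply G; lia. }
  assert (Hlim : forall eps, eps > 0 -> exists N, forall n, (n >= N)%nat -> cnorm (csub (gsum x n) l) < eps) by exact Hl.
  exists l. split; [|split].
  - apply csub_eq0, cnorm_small. intros eps He.
    destruct (Hlim (eps / 4)) as [N1 HN1]. lra.
    destruct (Hpow (eps / 4)) as [N2 HN2]. lra.
    set (n := (N1 + N2)%nat). specialize (HN1 n ltac:(lia)). specialize (HN2 n ltac:(lia)).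
    replace (csub (cmul (csub cone x) l) cone) with
      (cadd (cmul (csub cone x) (csub l (gsum x n))) (csub (cmul (csub cone x) (gsum x n)) cone)).
    2:{ rewrite cmul_subr, csub_tele; reflexivity. }
    eapply Rle_trans; [apply cnorm_triangle|]. rewrite gsum_l.
    replace (csub (csub cone (cpow x n)) cone) with (copp (cpow x n)).
    2:{ unfold csub. rewrite (cadd_comm cone), <- cadd_assoc, cadd_oppr, cadd_0r; auto. }
    rewrite cnorm_opp. eapply Rle_trans; [apply Rplus_le_compat; [apply cnorm_mul|apply cpow_norm]|].
    rewrite (cnorm_csub_sym l). pose proof (cnorm_sub_le (@cone A) x). pose proof (@cnorm_one A).
    pose proof (cnorm_ge0 (csub (gsum x n) l)). fold r. nra.
  - apply csub_eq0, cnorm_small. intros eps He.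
    destruct (Hlim (eps / 4)) as [N1 HN1]. lra.
    destruct (Hpow (eps / 4)) as [N2 HN2]. lra.
    set (n := (N1 + N2)%nat). specialize (HN1 n ltac:(lia)). specialize (HN2 n ltac:(lia)).
    replace (csub (cmul l (csub cone x)) cone) with
      (cadd (cmul (csub l (gsum x n)) (csub cone x)) (csub (cmul (gsum x n) (csub cone x)) cone)).
    2:{ rewrite cmul_subl, csub_tele; reflexivity. }
    eapply Rle_trans; [apply cnorm_triangle|]. rewrite gsum_r.
    replace (csub (csub cone (cpow x n)) cone) with (copp (cpow x n)).
    2:{ unfold csub. rewrite (cadd_comm cone), <- cadd_assoc, cadd_oppr, cadd_0r; auto. }
    rewrite cnorm_opp. eapply Rle_trans; [apply Rplus_le_compat; [apply cnorm_mul|apply cpow_norm]|].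
    rewrite (cnorm_csub_sym l). pose proof (cnorm_sub_le (@cone A) x). pose proof (@cnorm_one A).
    pose proof (cnorm_ge0 (csub (gsum x n) l)). fold r. nra.
  - apply le_eps. intros eps He. destruct (Hlim eps He) as [N HN]. specialize (HN N (le_n _)).
    replace l with (cadd (gsum x N) (copp (csub (gsum x N) l))).
    2:{ unfold csub. rewrite copp_add, copp_opp, cadd_assoc, cadd_oppr, cadd_0l; auto. }
    eapply Rle_trans; [apply cnorm_triangle|]. rewrite cnorm_opp. pose proof (gsum_norm x N Hx). fold r in H. lra.
Qed.

End Neumann.

Section Perturb.
Context {A : CstarAlg}.
Implicit Types a b c e g x y : A.

Lemma perturb a g e m : cmul a g = cone -> cmul g a = cone -> cnorm g <= m -> m * cnorm e < 1 ->
  exists h, cmul (csub a e) h = cone /\ cmul h (csub a e) = cone /\ cnorm h <= m / (1 - m * cnorm e).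
Proof.
  intros H1 H2 Hg Hm. pose proof (cnorm_ge0 g). pose proof (cnorm_ge0 e).
  assert (Hge : cnorm (cmul g e) <= m * cnorm e).
  { eapply Rle_trans; [apply cnorm_mul|]. apply Rmult_le_compat_r; auto. }
  destruct (neumann (cmul g e)) as [w [W1 [W2 W3]]]. lra.
  assert (E : csub a e = cmul a (csub cone (cmul g e))).
  { rewrite cmul_subr, cmul_1r, cmul_assoc, H1, cmul_1l; auto. }
  exists (cmul w g). rewrite E. split; [|split].
  - rewrite <- cmul_assoc, (cmul_assoc (csub cone (cmul g e))), W1, cmul_1l; auto.
  - rewrite <- cmul_assoc, (cmul_assoc g a), H2, cmul_1l; auto.
  - eapply Rle_trans; [apply cnorm_mul|]. 
    assert (0 <= m) by lra.
    assert (cnorm w <= 1 / (1 - m * cnorm e)).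
    { eapply Rle_trans; [apply W3|]. apply Rmult_le_compat_l. lra. apply Rinv_le_contravar; lra. }
    assert (0 <= cnorm w) by apply cnorm_ge0.
    replace (m / (1 - m * cnorm e)) with (1 / (1 - m * cnorm e) * m) by (field; lra).
    apply Rmult_le_compat; auto.
Qed.

Lemma cnorm_smul_one z : cnorm (csmul z (@cone A)) <= Cmod z.
Proof. rewrite cnorm_smul. pose proof (@cnorm_one A). pose proof (Cmod_ge0 z). nra. Qed.

Lemma easy_spec l c : cnorm c < Cmod l ->
  exists h, cmul (csub (csmul l cone) c) h = cone /\ cmul h (csub (csmul l cone) c) = cone /\
            cnorm h <= 1 / (Cmod l - cnorm c).
Proof.
  intro Hl. pose proof (cnorm_ge0 c).
  assert (Hz : l <> (0,0)). { intro E. rewrite E in Hl. rewrite (Cmod_unique (0,0) 0) in Hl; simpl; lra. }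
  pose proof (Cmod_pos l Hz).
  destruct (perturb (csmul l cone) (csmul (Cinv l) cone) c (/ Cmod l)) as [h [h1 [h2 h3]]].
  - rewrite cmul_smull, cmul_smulr, <- csmul_mul, cmul_1l, Cmul_inv, csmul_1; auto.
  - rewrite cmul_smull, cmul_smulr, <- csmul_mul, cmul_1l, Cmul_comm, Cmul_inv, csmul_1; auto.
  - eapply Rle_trans; [apply cnorm_smul_one|]. rewrite Cmod_inv; auto; lra.
  - apply (Rmult_lt_reg_l (Cmod l)); auto. rewrite <- Rmult_assoc, Rinv_r; lra.
  - exists h; repeat split; auto. eapply Rle_trans; [apply h3|]. right. field. split; lra.
Qed.

End Perturb.

Definition zeta (j : nat) : C := (cos (PI / 2 ^ j), sin (PI / 2 ^ j)).

Lemma Cmod_zeta j : Cmod (zeta j) = 1.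
Proof.
  apply Cmod_unique. lra. unfold zeta; simpl. pose proof (sin2_cos2 (PI / 2^j)). unfold Rsqr in H. lra.
Qed.

Lemma de_moivre t n : Cpow (cos t, sin t) n = (cos (INR n * t), sin (INR n * t)).
Proof.
  induction n.
  - simpl. rewrite Rmult_0_l, cos_0, sin_0. reflexivity.
  - simpl Cpow. rewrite IHn. rewrite S_INR. unfold Cmul; simpl.
    replace ((INR n + 1) * t) with (t + INR n * t) by ring. rewrite cos_plus, sin_plus.
    apply Cpair_eq; ring.
Qed.

Lemma zeta_pow j : Cpow (zeta j) (2 ^ j) = Cmk (-1).
Proof.
  unfold zeta. rewrite de_moivre, pow_INR.
  replace (INR 2 ^ j * (PI / 2 ^ j)) with PI.
  - rewrite cos_PI, sin_PI. reflexivity.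
  - replace (INR 2) with 2 by (simpl; ring). field. apply pow_nonzero. lra.
Qed.

Lemma cos_lb_ge a : 0 <= a <= 2 -> 1 - a*a/2 <= cos_lb a.
Proof.
  intros. unfold cos_lb, cos_approx, cos_term. simpl sum_f_R0. simpl.
  assert (H2 : 0 <= a*a) by nra. assert (H4 : 0 <= (a*a)*(a*a)) by nra.
  assert (a*a*a*a*(30 - a*a) >= 0). { replace (a*a*a*a) with ((a*a)*(a*a)) by ring. apply Rle_ge, Rmult_le_pos; nra. }
  lra.
Qed.

Lemma zeta_close j : (1 <= j)%nat -> Cmod (Csub C1 (zeta j)) <= PI / 2 ^ j.
Proof.
  intro Hj. set (t := PI / 2 ^ j).
  assert (Ht0 : 0 < t). { unfold t. apply Rdiv_lt_0_compat. apply PI_RGT_0. apply pow_lt; lra. }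
  assert (Ht1 : t <= PI / 2).
  { unfold t. unfold Rdiv. apply Rmult_le_compat_l. left; apply PI_RGT_0.
    apply Rinv_le_contravar. lra. destruct j. lia. simpl. assert (1 <= 2 ^ j) by (apply pow_R1_Rle; lra). lra. }
  pose proof PI_4. pose proof PI_RGT_0.
  assert (Hc : 1 - t * t / 2 <= cos t).
  { eapply Rle_trans; [apply cos_lb_ge; lra|]. apply COS; lra. }
  pose proof (Cmod_sq (Csub C1 (zeta j))) as Hs. pose proof (Cmod_ge0 (Csub C1 (zeta j))).
  assert (Hs' : Cmod (Csub C1 (zeta j)) * Cmod (Csub C1 (zeta j)) = (1 - cos t) * (1 - cos t) + sin t * sin t).
  { rewrite Hs. unfold Csub, Cadd, Copp, C1, zeta; simpl. fold t. ring. }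
  pose proof (sin2_cos2 t). unfold Rsqr in H2.
  assert (Cmod (Csub C1 (zeta j)) * Cmod (Csub C1 (zeta j)) <= t * t) by nra.
  nra.
Qed.

Lemma Cpow_mul z w n : Cpow (Cmul z w) n = Cmul (Cpow z n) (Cpow w n).
Proof.
  induction n; simpl. unfold Cmul, C1; simpl; apply Cpair_eq; ring.
  rewrite IHn. destruct z, w, (Cpow (r, r0) n), (Cpow (r1, r2) n). unfold Cmul; simpl; apply Cpair_eq; ring.
Qed.

Lemma Cpow_mk r n : Cpow (Cmk r) n = Cmk (r ^ n).
Proof.
  induction n; simpl. reflexivity. rewrite IHn. unfold Cmul, Cmk; simpl; apply Cpair_eq; ring.
Qed.

Lemma exists_small_zeta eps : 0 < eps -> exists j, (1 <= j)%nat /\ Cmod (Csub C1 (zeta j)) < eps.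
Proof.
  intro He. pose proof PI_RGT_0.
  assert (Ha : Rabs (1/2) < 1) by (rewrite Rabs_right; lra).
  destruct (pow_lt_1_zero (1/2) Ha (eps / PI)) as [N HN]. apply Rdiv_lt_0_compat; lra.
  exists (S N). split. lia. eapply Rle_lt_trans; [apply zeta_close; lia|].
  specialize (HN (S N) ltac:(lia)). rewrite Rabs_right in HN.
  2:{ apply Rle_ge, pow_le; lra. }
  replace (PI / 2 ^ S N) with (PI * (1/2) ^ S N).
  2:{ unfold Rdiv. rewrite Rmult_1_l, pow_inv. reflexivity. }
  apply (Rmult_lt_reg_r (/ PI)). apply Rinv_0_lt_compat; lra.
  replace (PI * (1 / 2) ^ S N * / PI) with ((1/2) ^ S N) by (field; lra). exact HN.
Qed.

Section Rickart.
Context {A : CstarAlg}.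
Implicit Types a b c e g x y : A.

Definition inv_of (a : A) : A :=
  epsilon (inhabits czero) (fun g => cmul a g = cone /\ cmul g a = cone).
Lemma inv_of_spec a : cinvertible a -> cmul a (inv_of a) = cone /\ cmul (inv_of a) a = cone.
Proof. intro H. unfold inv_of. apply (epsilon_spec (inhabits czero) (fun g => cmul a g = cone /\ cmul g a = cone)). exact H. Qed.

Lemma alg_sub_sub a b c : csub (csub a b) (csub c b) = csub a c.
Proof.
  unfold csub. rewrite copp_add, copp_opp.
  rewrite (cadd_comm (copp c) b), cadd_assoc, <- (cadd_assoc a (copp b) b), cadd_oppl, cadd_0r; reflexivity.
Qed.
Lemma cadd_swap a b c : cadd (cadd a b) c = cadd (cadd a c) b.
Proof. rewrite <- !cadd_assoc, (cadd_comm b c); reflexivity. Qed.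
Lemma alg_sub_sub2 a b c : csub (csub c b) (csub c a) = csub a b.
Proof.
  unfold csub. rewrite copp_add, copp_opp.
  rewrite cadd_assoc, (cadd_swap c (copp b) (copp c)), cadd_oppr, cadd_0l, cadd_comm; reflexivity.
Qed.
Lemma alg_G1 a b c : csub (csub a (copp b)) (csub b (copp c)) = csub a c.
Proof.
  unfold csub. rewrite !copp_opp, copp_add.
  rewrite cadd_assoc, <- (cadd_assoc a b (copp b)), cadd_oppr, cadd_0r; reflexivity.
Qed.
Lemma alg_G2 a b c : csub (csub a b) (csub (copp b) (copp c)) = csub a c.
Proof.
  unfold csub. rewrite !copp_opp, copp_add, copp_opp.
  rewrite cadd_assoc, <- (cadd_assoc a (copp b) b), cadd_oppl, cadd_0r; reflexivity.
Qed.
Lemma alg_G3 a b : csub (csub a (copp b)) (csub a b) = cadd b b.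
Proof.
  unfold csub. rewrite !copp_opp, copp_add, copp_opp.
  rewrite cadd_assoc, (cadd_swap a b (copp a)), cadd_oppr, cadd_0l; reflexivity.
Qed.
Lemma alg_sub_add a b c d : csub (cadd a b) (cadd c d) = cadd (csub a c) (csub b d).
Proof.
  unfold csub. rewrite copp_add. rewrite <- !cadd_assoc. f_equal.
  rewrite !cadd_assoc. f_equal. apply cadd_comm.
Qed.
Lemma two_one : cadd (@cone A) cone = csmul (Cmk 2) cone.
Proof.
  replace (Cmk 2) with (Cadd C1 C1) by (unfold Cadd, C1, Cmk; simpl; apply Cpair_eq; ring).
  rewrite csmul_addl, csmul_1; reflexivity.
Qed.
Lemma two_x a : cadd a a = csmul (Cmk 2) a.
Proof.
  replace (Cmk 2) with (Cadd C1 C1) by (unfold Cadd, C1, Cmk; simpl; apply Cpair_eq; ring).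
  rewrite csmul_addl, csmul_1; reflexivity.
Qed.
Lemma half_two a : csmul (Cmk (1/2)) (csmul (Cmk 2) a) = a.
Proof.
  rewrite <- csmul_mul. replace (Cmul (Cmk (1/2)) (Cmk 2)) with C1. apply csmul_1.
  unfold Cmul, Cmk, C1; simpl; apply Cpair_eq; field.
Qed.
Lemma L1 y : cmul (csub cone y) (csub cone (copp y)) = csub (@cone A) (cmul y y).
Proof. rewrite cmul_subl, cmul_1l, cmul_subr, cmul_1r, cmul_oppr. apply alg_G1. Qed.
Lemma L2 y : cmul (csub cone (copp y)) (csub cone y) = csub (@cone A) (cmul y y).
Proof. rewrite cmul_subl, cmul_1l, cmul_subr, cmul_1r, cmul_oppl. apply alg_G2. Qed.
Lemma L3 y : cadd (csub cone (copp y)) (csub cone y) = csmul (Cmk 2) (@cone A).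
Proof.
  rewrite <- two_one. unfold csub. rewrite copp_opp.
  rewrite cadd_assoc, <- (cadd_assoc cone y cone), (cadd_comm y cone), cadd_assoc,
    <- cadd_assoc, cadd_oppr, cadd_0r; reflexivity.
Qed.

Lemma cpow_one x : cpow x 1 = x.
Proof. simpl. apply cmul_1r. Qed.
Lemma pow2S j : (2 ^ S j = 2 ^ j + 2 ^ j)%nat.
Proof. simpl. lia. Qed.

Lemma Pk_eq l (k : A) n : cpow (csmul l k) n = csmul (Cpow l n) (cpow k n).
Proof.
  induction n; simpl. rewrite csmul_1; auto.
  rewrite IHn, cmul_smull, cmul_smulr, csmul_mul; reflexivity.
Qed.
Lemma Pk_zeta i l (k : A) : cpow (csmul (Cmul (zeta i) l) k) (2 ^ i) = copp (cpow (csmul l k) (2 ^ i)).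
Proof.
  rewrite !Pk_eq, Cpow_mul, zeta_pow, csmul_mul, csmul_m1; reflexivity.
Qed.

Lemma sa_pow2 (k : A) (Hk : cstar k = k) j :
  cstar (cpow k (2 ^ j)) = cpow k (2 ^ j) /\ cnorm (cpow k (2 ^ j)) = cnorm k ^ (2 ^ j).
Proof.
  induction j.
  - simpl. rewrite cmul_1r, Hk. split; auto. ring.
  - destruct IHj as [H1 H2]. rewrite pow2S, cpow_add, pow_add. split.
    + rewrite cstar_mul, H1; reflexivity.
    + rewrite <- H1 at 1. rewrite cnorm_cstar, H2; reflexivity.
Qed.

Lemma Cmod_le_abs (a b : R) : Cmod (a, b) <= Rabs a + Rabs b.
Proof.
  pose proof (Cmod_sq (a,b)). pose proof (Cmod_ge0 (a,b)). simpl in H.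
  pose proof (Rabs_pos a). pose proof (Rabs_pos b).
  assert (Rabs a * Rabs a = a * a) by (rewrite <- Rabs_mult; apply Rabs_right; nra).
  assert (Rabs b * Rabs b = b * b) by (rewrite <- Rabs_mult; apply Rabs_right; nra).
  nra.
Qed.

Lemma Cmod_fst_le (a b : R) : Rabs a <= Cmod (a, b).
Proof.
  pose proof (Cmod_sq (a,b)). pose proof (Cmod_ge0 (a,b)). simpl in H. pose proof (Rabs_pos a).
  assert (Rabs a * Rabs a = a * a) by (rewrite <- Rabs_mult; apply Rabs_right; nra). nra.
Qed.
Lemma Cmod_snd_le (a b : R) : Rabs b <= Cmod (a, b).
Proof.
  pose proof (Cmod_sq (a,b)). pose proof (Cmod_ge0 (a,b)). simpl in H. pose proof (Rabs_pos b).
  assert (Rabs b * Rabs b = b * b) by (rewrite <- Rabs_mult; apply Rabs_right; nra). nra.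
Qed.

Variable k : A.
Variables R R1 : R.
Hypothesis HR : 0 < R.
Hypothesis HR1 : R < R1.
Hypothesis Hinv : forall l, Cmod l <= R1 -> cinvertible (csub cone (csmul l k)).

Definition Fk (l : C) : A := inv_of (csub cone (csmul l k)).
Lemma Fk_spec l : Cmod l <= R1 ->
  cmul (csub cone (csmul l k)) (Fk l) = cone /\ cmul (Fk l) (csub cone (csmul l k)) = cone.
Proof. intro H. apply inv_of_spec, Hinv, H. Qed.

Lemma unif_bound : exists M, 0 < M /\ forall l, Cmod l <= R -> cnorm (Fk l) <= M.
Proof.
  set (K := cnorm k + 1). assert (HK : 1 <= K) by (unfold K; pose proof (cnorm_ge0 k); lra).
  assert (Hpos : forall u v, 0 < Rmin ((R1 - R) / 4) (/ (4 * cnorm (Fk (u, v)) * K + 4))).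
  { intros u v. apply Rmin_pos. lra. apply Rinv_0_lt_compat. pose proof (cnorm_ge0 (Fk (u,v))). nra. }
  set (delta := fun u v => mkposreal _ (Hpos u v)).
  destruct (Compactness.compactness_value_2d (-R) R (-R) R delta) as [d Hd].
  pose proof (cond_pos d) as Hd0.
  exists (/ (2 * d * K)). split. apply Rinv_0_lt_compat. nra.
  intros [x1 x2] Hl.
  assert (B1 : -R <= x1 <= R). { pose proof (Cmod_fst_le x1 x2). pose proof (Rle_abs x1). pose proof (Rle_abs (-x1)). rewrite Rabs_Ropp in *. lra. }
  assert (B2 : -R <= x2 <= R). { pose proof (Cmod_snd_le x1 x2). pose proof (Rle_abs x2). pose proof (Rle_abs (-x2)). rewrite Rabs_Ropp in *. lra. }
  specialize (Hd x1 x2 B1 B2). apply NNPP. intro Hn. apply Hd. intros [u [v [Hu [Hv [H1 [H2 H3]]]]]]. apply Hn.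
  simpl in H1, H2, H3.
  set (m := cnorm (Fk (u, v))) in *. set (dl := Rmin ((R1 - R) / 4) (/ (4 * m * K + 4))) in *.
  assert (Hm0 : 0 <= m) by apply cnorm_ge0.
  assert (Hdl1 : dl <= (R1 - R) / 4) by apply Rmin_l.
  assert (Hdl2 : dl <= / (4 * m * K + 4)) by apply Rmin_r.
  assert (Hdl0 : 0 < dl) by apply Hpos.
  assert (Hdl3 : dl * (4 * m * K + 4) <= 1).
  { apply (Rmult_le_compat_r (4 * m * K + 4)) in Hdl2. rewrite Rinv_l in Hdl2. lra. nra. nra. }
  assert (Hdist : Cmod (Csub (x1, x2) (u, v)) < 2 * dl).
  { unfold Csub, Cadd, Copp; simpl. eapply Rle_lt_trans; [apply Cmod_le_abs|].
    replace (x1 + - u) with (x1 - u) by ring. replace (x2 + - v) with (x2 - v) by ring. lra. }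
  assert (Ht : Cmod (u, v) <= R1).
  { replace (u, v) with (Cadd (x1, x2) (u - x1, v - x2)) by (unfold Cadd; simpl; apply Cpair_eq; ring).
    eapply Rle_trans; [apply Cmod_triangle|]. pose proof (Cmod_le_abs (u - x1) (v - x2)).
    rewrite <- (Rabs_Ropp (u - x1)), <- (Rabs_Ropp (v - x2)) in H.
    replace (- (u - x1)) with (x1 - u) in H by ring. replace (- (v - x2)) with (x2 - v) in H by ring. lra. }
  destruct (Fk_spec (u, v) Ht) as [F1 F2].
  set (e := csmul (Csub (x1, x2) (u, v)) k).
  assert (He : cnorm e <= 2 * dl * cnorm k).
  { unfold e. rewrite cnorm_smul. apply Rmult_le_compat_r. apply cnorm_ge0. lra. }
  assert (Hme : m * cnorm e <= 1/2).
  { pose proof (cnorm_ge0 k). pose proof (cnorm_ge0 e).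
    assert (m * cnorm e <= m * (2 * dl * cnorm k)) by (apply Rmult_le_compat_l; auto).
    assert (m * (2 * dl * cnorm k) <= 2 * dl * m * K) by (unfold K; nra). nra. }
  destruct (perturb (csub cone (csmul (u, v) k)) (Fk (u, v)) e m F1 F2 (Rle_refl _)) as [h [h1 [h2 h3]]]. lra.
  assert (E : csub (csub cone (csmul (u, v) k)) e = csub cone (csmul (x1, x2) k)).
  { unfold e. rewrite csmul_subl. apply alg_sub_sub. }
  rewrite E in h1, h2.
  destruct (Fk_spec (x1, x2) ltac:(lra)) as [G1 G2].
  rewrite (inv_unique _ _ _ G1 h2).
  eapply Rle_trans; [apply h3|].
  assert (m / (1 - m * cnorm e) <= 2 * m).
  { pose proof (cnorm_ge0 e). apply (Rmult_le_reg_r (1 - m * cnorm e)). lra.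
    unfold Rdiv. rewrite Rmult_assoc, Rinv_l by lra. nra. }
  assert (m <= / (4 * d * K)).
  { apply (Rmult_le_reg_r (4 * d * K)). nra. rewrite Rinv_l by nra. nra. }
  replace (/ (2 * d * K)) with (2 * / (4 * d * K)) by (field; nra). lra.
Qed.

Lemma Fk_identity l m : Cmod l <= R1 -> Cmod m <= R1 ->
  csub (Fk l) (Fk m) = cmul (Fk l) (cmul (csmul (Csub l m) k) (Fk m)).
Proof.
  intros Hl Hm. destruct (Fk_spec l Hl) as [Fl1 Fl2]. destruct (Fk_spec m Hm) as [Fm1 Fm2].
  rewrite csmul_subl, <- (alg_sub_sub2 (csmul l k) (csmul m k) cone).
  rewrite cmul_subl, cmul_subr, Fm1, cmul_1r, cmul_assoc, Fl2, cmul_1l; reflexivity.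
Qed.

Fixpoint Gk (j : nat) (l : C) : A :=
  match j with
  | O => Fk l
  | S i => csmul (Cmk (1/2)) (cadd (Gk i l) (Gk i (Cmul (zeta i) l)))
  end.

Lemma Cmod_zeta_mul i l : Cmod (Cmul (zeta i) l) = Cmod l.
Proof. rewrite Cmod_mul, Cmod_zeta; ring. Qed.

Lemma Gk_inv j : forall l, Cmod l <= R ->
  cmul (csub cone (cpow (csmul l k) (2 ^ j))) (Gk j l) = cone /\
  cmul (Gk j l) (csub cone (cpow (csmul l k) (2 ^ j))) = cone.
Proof.
  induction j; intros l Hl.
  - simpl Gk. rewrite cpow_one. apply Fk_spec. lra.
  - destruct (IHj l Hl) as [X1 X2].
    destruct (IHj (Cmul (zeta j) l) ltac:(rewrite Cmod_zeta_mul; auto)) as [Y1 Y2].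
    rewrite Pk_zeta in Y1, Y2.
    simpl Gk. rewrite pow2S, cpow_add.
    set (y := cpow (csmul l k) (2 ^ j)) in *.
    set (X := Gk j l) in *. set (Y := Gk j (Cmul (zeta j) l)) in *.
    split.
    + rewrite cmul_smulr, cmul_addr.
      rewrite <- L2 at 1. rewrite <- cmul_assoc, X1, cmul_1r.
      rewrite <- L1, <- cmul_assoc, Y1, cmul_1r.
      rewrite L3, half_two; reflexivity.
    + rewrite cmul_smull, cmul_addl.
      rewrite <- L1 at 1. rewrite cmul_assoc, X2, cmul_1l.
      rewrite <- L2, cmul_assoc, Y2, cmul_1l.
      rewrite L3, half_two; reflexivity.
Qed.

Lemma Gk_lip L (HL : forall l m, Cmod l <= R -> Cmod m <= R ->
     cnorm (csub (Fk l) (Fk m)) <= L * Cmod (Csub l m)) j :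
  forall l m, Cmod l <= R -> Cmod m <= R -> cnorm (csub (Gk j l) (Gk j m)) <= L * Cmod (Csub l m).
Proof.
  induction j; intros l m Hl Hm.
  - apply HL; auto.
  - simpl Gk. rewrite <- csmul_sub, alg_sub_add, cnorm_smul, Cmod_mk.
    rewrite Rabs_right by lra.
    eapply Rle_trans. apply Rmult_le_compat_l. lra. apply cnorm_triangle.
    pose proof (IHj l m Hl Hm).
    pose proof (IHj (Cmul (zeta j) l) (Cmul (zeta j) m) ltac:(rewrite Cmod_zeta_mul; auto) ltac:(rewrite Cmod_zeta_mul; auto)).
    replace (Csub (Cmul (zeta j) l) (Cmul (zeta j) m)) with (Cmul (zeta j) (Csub l m)) in H0
      by (destruct (zeta j), l, m; unfold Cmul, Csub, Cadd, Copp; simpl; apply Cpair_eq; ring).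
    rewrite Cmod_zeta_mul in H0. lra.
Qed.

Lemma rickart (Hk : cstar k = k) : R * cnorm k < 1.
Proof.
  destruct unif_bound as [M [HM0 HM]].
  set (L := M * M * cnorm k).
  assert (HL0 : 0 <= L) by (unfold L; pose proof (cnorm_ge0 k); nra).
  assert (HL : forall l m, Cmod l <= R -> Cmod m <= R -> cnorm (csub (Fk l) (Fk m)) <= L * Cmod (Csub l m)).
  { intros l m Hl Hm. rewrite Fk_identity by lra.
    eapply Rle_trans; [apply cnorm_mul3|]. rewrite cnorm_smul.
    pose proof (HM l Hl). pose proof (HM m Hm). pose proof (cnorm_ge0 (Fk l)). pose proof (cnorm_ge0 (Fk m)).
    pose proof (cnorm_ge0 k). pose proof (Cmod_ge0 (Csub l m)).
    unfold L. 
    assert (cnorm (Fk l) * (Cmod (Csub l m) * cnorm k) <= M * (Cmod (Csub l m) * cnorm k)) by (apply Rmult_le_compat_r; [apply Rmult_le_pos; auto | auto]).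
    assert (M * (Cmod (Csub l m) * cnorm k) * cnorm (Fk m) <= M * (Cmod (Csub l m) * cnorm k) * M) by (apply Rmult_le_compat_l; [apply Rmult_le_pos; [lra | apply Rmult_le_pos; auto] | auto]).
    eapply Rle_trans. apply Rmult_le_compat_r. auto. exact H5.
    eapply Rle_trans. exact H6. right; ring. }
  destruct (Rlt_or_le (R * cnorm k) 1) as [H|H]; auto. exfalso.
  assert (Hk0 : 0 < cnorm k). { destruct (cnorm_ge0 k) as [h|h]; auto. rewrite <- h in H. lra. }
  destruct (exists_small_zeta (1 / (2 * (L * R + 1)))) as [j [Hj Hz]].
  { apply Rdiv_lt_0_compat. lra. nra. }
  set (l0 := Cmk (/ cnorm k)).
  assert (Hl0 : Cmod l0 <= R).
  { unfold l0. rewrite Cmod_mk, Rabs_right. apply (Rmult_le_reg_r (cnorm k)); auto. rewrite Rinv_l; lra.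
    left; apply Rinv_0_lt_compat; auto. }
  destruct (Gk_inv j l0 Hl0) as [X1 X2].
  destruct (Gk_inv j (Cmul (zeta j) l0) ltac:(rewrite Cmod_zeta_mul; auto)) as [Y1 Y2].
  rewrite Pk_zeta in Y1, Y2.
  pose proof (Gk_lip L HL j l0 (Cmul (zeta j) l0) Hl0 ltac:(rewrite Cmod_zeta_mul; auto)) as HD.
  replace (Csub l0 (Cmul (zeta j) l0)) with (Cmul (Csub C1 (zeta j)) l0) in HD
    by (destruct (zeta j), l0; unfold Cmul, Csub, Cadd, Copp, C1; simpl; apply Cpair_eq; ring).
  rewrite Cmod_mul in HD.
  set (y := cpow (csmul l0 k) (2 ^ j)) in *.
  set (X := Gk j l0) in *. set (Y := Gk j (Cmul (zeta j) l0)) in *.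
  assert (Hy : cnorm y = 1).
  { unfold y. rewrite Pk_eq, cnorm_smul. destruct (sa_pow2 k Hk j) as [_ ->].
    unfold l0. rewrite Cpow_mk, Cmod_mk, Rabs_right. rewrite <- Rpow_mult_distr, Rinv_l, pow1; lra.
    apply Rle_ge, pow_le. left; apply Rinv_0_lt_compat; auto. }
  assert (E : cmul (cmul (csub cone y) (csub X Y)) (csub cone (copp y)) = cadd y y).
  { rewrite (cmul_subr (csub cone y) X Y), X1, cmul_subl, cmul_1l, <- cmul_assoc, Y2, cmul_1r. apply alg_G3. }
  assert (N1 : cnorm (cadd y y) = 2). { rewrite two_x, cnorm_smul, Cmod_mk, Hy, Rabs_right; lra. }
  assert (N2 : cnorm (cmul (cmul (csub cone y) (csub X Y)) (csub cone (copp y)))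
               <= cnorm (csub cone y) * cnorm (csub X Y) * cnorm (csub cone (copp y))).
  { eapply Rle_trans; [apply cnorm_mul|]. apply Rmult_le_compat_r. apply cnorm_ge0. apply cnorm_mul. }
  rewrite E, N1 in N2.
  assert (A1 : cnorm (csub cone y) <= 2). { pose proof (cnorm_sub_le cone y). pose proof (@cnorm_one A). lra. }
  assert (A2 : cnorm (csub cone (copp y)) <= 2).
  { pose proof (cnorm_sub_le cone (copp y)). pose proof (@cnorm_one A). rewrite cnorm_opp in H0. lra. }
  assert (A3 : cnorm (csub X Y) < 1/2).
  { eapply Rle_lt_trans; [apply HD|].
    pose proof (Cmod_ge0 (Csub C1 (zeta j))).
    assert (L * (Cmod (Csub C1 (zeta j)) * Cmod l0) <= L * R * Cmod (Csub C1 (zeta j))).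
    { replace (L * R * Cmod (Csub C1 (zeta j))) with (L * (Cmod (Csub C1 (zeta j)) * R)) by ring.
      apply Rmult_le_compat_l; auto. apply Rmult_le_compat_l; auto. }
    assert (L * R * Cmod (Csub C1 (zeta j)) <= L * R * (1 / (2 * (L * R + 1)))).
    { apply Rmult_le_compat_l. nra. lra. }
    assert (L * R * (1 / (2 * (L * R + 1))) < 1/2).
    { apply (Rmult_lt_reg_r (2 * (L * R + 1))). nra. field_simplify; nra. }
    lra. }
  pose proof (cnorm_ge0 (csub cone y)). pose proof (cnorm_ge0 (csub X Y)). pose proof (cnorm_ge0 (csub cone (copp y))).
  assert (cnorm (csub cone y) * cnorm (csub X Y) <= 2 * cnorm (csub X Y)) by nra.
  assert (cnorm (csub cone y) * cnorm (csub X Y) * cnorm (csub cone (copp y)) <= 2 * cnorm (csub X Y) * 2) by nra.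
  lra.
Qed.

End Rickart.

Section Spectral.
Context {A : CstarAlg}.
Implicit Types a b c e g h x y : A.

Lemma copp_sub a b : copp (csub a b) = csub b a.
Proof. unfold csub. rewrite copp_add, copp_opp, cadd_comm; reflexivity. Qed.
Lemma sub_opp_opp a b : csub (copp a) (copp b) = csub b a.
Proof. unfold csub. rewrite copp_opp, cadd_comm; reflexivity. Qed.
Lemma alg_G4 c p q : copp (csub c (csub p q)) = csub (csub p c) q.
Proof.
  rewrite copp_sub. unfold csub. rewrite cadd_swap; reflexivity.
Qed.
Lemma alg_G5 P S b a : csub (csub (cadd P S) b) (csub S (csub b a)) = csub P a.
Proof.
  unfold csub. rewrite copp_add, copp_opp.
  rewrite cadd_assoc, (cadd_swap (cadd P S) (copp b) (copp S)), <- (cadd_assoc P S (copp S)), cadd_oppr, cadd_0r.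
  rewrite cadd_assoc, <- (cadd_assoc P (copp b) b), cadd_oppl, cadd_0r; reflexivity.
Qed.
Lemma csub_0_l a : csub a czero = a.
Proof. unfold csub; rewrite copp_0, cadd_0r; auto. Qed.

Lemma spec_bound h rho : cstar h = h -> 0 <= rho ->
  (forall mu : C, Cmod mu > rho -> cinvertible (csub h (csmul mu cone))) -> cnorm h <= rho.
Proof.
  intros Hh Hr Hs. destruct (Rle_or_lt (cnorm h) rho) as [H|H]; auto. exfalso.
  set (n := cnorm h) in *.
  assert (Hn : 0 < n) by lra.
  assert (Hinv : forall l, Cmod l <= 2 / (n + rho) -> cinvertible (csub cone (csmul l h))).
  { intros l Hl. destruct (classic (l = (0,0))) as [E|E].
    - rewrite E, csmul_0, csub_0_l. apply cinv_one.
    - pose proof (Cmod_pos l E).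
      assert (Hm : Cmod (Cinv l) > rho).
      { rewrite Cmod_inv by auto. apply (Rmult_lt_reg_r (Cmod l)); auto. rewrite Rinv_l by lra.
        assert (Cmod l * (n + rho) <= 2).
        { apply (Rmult_le_compat_r (n + rho)) in Hl. unfold Rdiv in Hl. rewrite Rmult_assoc, Rinv_l in Hl; lra. lra. }
        nra. }
      destruct (Hs _ Hm) as [g Hg].
      assert (E2 : csub cone (csmul l h) = csmul (Copp l) (csub h (csmul (Cinv l) cone))).
      { rewrite csmul_sub, <- csmul_mul.
        replace (Cmul (Copp l) (Cinv l)) with (Copp C1).
        - rewrite !csmul_Copp, csmul_1, sub_opp_opp; reflexivity.
        - rewrite <- (Cmul_inv l E). destruct l, (Cinv (r, r0)); unfold Cmul, Copp; simpl; apply Cpair_eq; ring. }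
      rewrite E2. apply cinv_smul. 
      + intro E3. apply E. destruct l; unfold Copp in E3; simpl in E3. injection E3; intros. apply Cpair_eq; lra.
      + exists g; exact Hg. }
  pose proof (rickart h (/ n) (2 / (n + rho)) ltac:(apply Rinv_0_lt_compat; lra)
                ltac:(apply (Rmult_lt_reg_r (n * (n + rho))); [nra| field_simplify; nra]) Hinv Hh).
  fold n in H0. rewrite Rinv_l in H0; lra.
Qed.

Lemma pos_sa a : cpos a -> cstar a = a.
Proof. intros [H _]; exact H. Qed.

Lemma pos_inv a l : cpos a -> ~ (snd l = 0 /\ 0 <= fst l) -> cinvertible (csub a (csmul l cone)).
Proof.
  intros [_ Hp] Hl. apply NNPP. intro Hn. apply Hl. apply (Hp l Hn).
Qed.

Lemma pos_norm c : cpos c -> cnorm (csub (csmul (Cmk (cnorm c)) cone) c) <= cnorm c.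
Proof.
  intro Hc. set (s := cnorm c). assert (Hs : 0 <= s) by apply cnorm_ge0.
  apply spec_bound; auto.
  - rewrite cstar_sub, cstar_real, (pos_sa c Hc); reflexivity.
  - intros mu Hmu.
    set (l := Csub (Cmk s) mu).
    assert (E : csub (csub (csmul (Cmk s) cone) c) (csmul mu cone) = copp (csub c (csmul l cone))).
    { unfold l. rewrite csmul_subl, alg_G4; reflexivity. }
    rewrite E. apply cinv_opp.
    destruct (classic (snd l = 0 /\ 0 <= fst l)) as [[H1 H2]|H]; [|apply pos_inv; auto].
    destruct mu as [m1 m2]. unfold l, Csub, Cadd, Copp, Cmk in H1, H2; simpl in H1, H2.
    assert (m2 = 0) by lra. subst m2.
    assert (Hm : Cmod (m1, 0) = Rabs m1) by (apply (Cmod_mk m1)). rewrite Hm in Hmu.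
    assert (m1 < - s). { destruct (Rcase_abs m1) as [h|h]; [rewrite Rabs_left in Hmu by lra | rewrite Rabs_right in Hmu by lra]; lra. }
    destruct (easy_spec l c) as [g [g1 [g2 _]]].
    { unfold l, Csub, Cadd, Copp, Cmk; simpl. rewrite Rplus_0_l, Ropp_0.
      change (s + - m1, 0) with (Cmk (s + - m1)). rewrite (Cmod_mk (s + - m1)). rewrite Rabs_right; fold s; lra. }
    exists (copp g). rewrite <- copp_sub, cmul_oppl, cmul_oppr, copp_opp, cmul_oppr, cmul_oppl, copp_opp. auto.
Qed.

Lemma norm_mono a b : cpos a -> cpos (csub b a) -> cnorm a <= cnorm b.
Proof.
  intros Ha Hba. apply spec_bound; [apply pos_sa; auto | apply cnorm_ge0 |].
  intros mu Hmu. destruct (classic (snd mu = 0 /\ 0 <= fst mu)) as [[H1 H2]|H]; [|apply pos_inv; auto].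
  destruct mu as [m1 m2]. simpl in H1, H2. subst m2.
  change (m1, 0) with (Cmk m1) in Hmu. rewrite (Cmod_mk m1), Rabs_right in Hmu by lra.
  set (c := csub b a). set (s := cnorm c).
  pose proof (pos_norm c Hba) as HY. fold s in HY.
  assert (Hs : 0 <= s) by apply cnorm_ge0.
  pose proof (cnorm_ge0 b).
  destruct (easy_spec (Cmk (m1 + s)) b) as [g [g1 [g2 g3]]].
  { rewrite Cmod_mk, Rabs_right; lra. }
  rewrite Cmod_mk, Rabs_right in g3 by lra.
  destruct (perturb _ _ (csub (csmul (Cmk s) cone) c) (1 / (m1 + s - cnorm b)) g1 g2 g3) as [h [h1 [h2 _]]].
  { apply (Rmult_lt_reg_r (m1 + s - cnorm b)). lra.
    replace (1 / (m1 + s - cnorm b) * cnorm (csub (csmul (Cmk s) cone) c) * (m1 + s - cnorm b))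
      with (cnorm (csub (csmul (Cmk s) cone) c)) by (field; lra). lra. }
  assert (E : csub (csub (csmul (Cmk (m1 + s)) cone) b) (csub (csmul (Cmk s) cone) c) = csub (csmul (m1, 0) cone) a).
  { replace (Cmk (m1 + s)) with (Cadd (Cmk m1) (Cmk s)) by (unfold Cadd, Cmk; simpl; apply Cpair_eq; ring).
    rewrite csmul_addl. unfold c. apply alg_G5. }
  rewrite E in h1, h2.
  rewrite <- copp_sub. apply cinv_opp. exists h; auto.
Qed.

End Spectral.

Lemma geom_cv r c : 0 <= r < 1 -> Un_cv (fun n => c * r ^ n) 0.
Proof.
  intros Hr eps He. destruct (Req_dec c 0) as [E|E].
  - exists O. intros n _. unfold R_dist. rewrite E, Rmult_0_l, Rminus_0_r, Rabs_R0. lra.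
  - assert (Ha : Rabs r < 1) by (rewrite Rabs_right; lra).
    pose proof (Rabs_pos_lt c E).
    destruct (pow_lt_1_zero r Ha (eps / Rabs c)) as [N HN]. apply Rdiv_lt_0_compat; lra.
    exists N. intros n Hn. unfold R_dist. rewrite Rminus_0_r, Rabs_mult.
    specialize (HN n Hn). apply (Rmult_lt_compat_l (Rabs c)) in HN; auto.
    replace (Rabs c * (eps / Rabs c)) with eps in HN by (field; lra). lra.
Qed.

Lemma squeeze (a b c : nat -> R) : (forall n, (1 <= n)%nat -> 0 <= a n <= b n + c n) ->
  Un_cv b 0 -> Un_cv c 0 -> Un_cv a 0.
Proof.
  intros H Hb Hc eps He. destruct (Hb (eps/2)) as [N1 H1]. lra. destruct (Hc (eps/2)) as [N2 H2]. lra.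
  exists (S (N1 + N2)). intros n Hn. specialize (H1 n ltac:(lia)). specialize (H2 n ltac:(lia)).
  specialize (H n ltac:(lia)). unfold R_dist in *. rewrite Rminus_0_r in *.
  rewrite Rabs_right by lra. pose proof (Rle_abs (b n)). pose proof (Rle_abs (c n)). lra.
Qed.

Lemma cv_shift (a : nat -> R) : Un_cv a 0 -> Un_cv (fun n => a (S n)) 0.
Proof. intros H eps He. destruct (H eps He) as [N HN]. exists N. intros n Hn. apply HN. lia. Qed.

Lemma cv_zero_le (x : R) (a : nat -> R) : Un_cv a 0 -> (forall n, (1 <= n)%nat -> 0 <= x <= a n) -> x = 0.
Proof.
  intros H Hx. destruct (Req_dec x 0) as [E|E]; auto. exfalso.
  assert (0 < x) by (specialize (Hx 1%nat (le_n _)); lra).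
  destruct (H x H0) as [N HN]. specialize (HN (S N) ltac:(lia)). specialize (Hx (S N) ltac:(lia)).
  unfold R_dist in HN. rewrite Rminus_0_r, Rabs_right in HN; lra.
Qed.

Section Main.
Context {A : CstarAlg} {X : Type} (d : X -> X -> A) (Hd : is_cmetric A X d).

Lemma d_pos x y : cpos (d x y).
Proof. apply Hd. Qed.
Lemma d_sym x y : d x y = d y x.
Proof. apply Hd. Qed.
Lemma d_tri x y z : cnorm (d x z) <= cnorm (d x y) + cnorm (d y z).
Proof.
  eapply Rle_trans; [apply norm_mono; [apply d_pos | apply Hd] |]. apply cnorm_triangle.
Qed.
Lemma d_zero x y : cnorm (d x y) = 0 -> x = y.
Proof. intro H. apply Hd. apply cnorm_eq0, H. Qed.

Lemma limit_unique (w : nat -> X) a b :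
  Un_cv (fun n => cnorm (d (w n) a)) 0 -> Un_cv (fun n => cnorm (d (w n) b)) 0 -> a = b.
Proof.
  intros Ha Hb. apply d_zero. apply (cv_zero_le _ (fun n => cnorm (d (w n) a) + cnorm (d (w n) b))).
  - intros eps He. destruct (Ha (eps/2)) as [N1 H1]. lra. destruct (Hb (eps/2)) as [N2 H2]. lra.
    exists (N1 + N2)%nat. intros n Hn. specialize (H1 n ltac:(lia)). specialize (H2 n ltac:(lia)).
    unfold R_dist in *. rewrite Rminus_0_r in *. pose proof (cnorm_ge0 (d (w n) a)). pose proof (cnorm_ge0 (d (w n) b)).
    rewrite Rabs_right in * by lra. lra.
  - intros n _. split. apply cnorm_ge0. rewrite (d_sym (w n) a) at 1. eapply Rle_trans; [apply (d_tri a (w n) b)|].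
    rewrite (d_sym a (w n)). lra.
Qed.

End Main.

Lemma pow_le_1 r n : 0 <= r <= 1 -> r ^ n <= 1.
Proof. intro H. rewrite <- (pow1 n). apply pow_incr. lra. Qed.

Lemma pow_le_mono r n N : 0 <= r <= 1 -> (N <= n)%nat -> r ^ n <= r ^ N.
Proof.
  intros Hr Hn. replace n with ((n - N) + N)%nat by lia. rewrite pow_add.
  pose proof (pow_le r N (proj1 Hr)). assert (r ^ (n - N) <= 1) by (apply pow_le_1; lra). nra.
Qed.

Lemma iter_fixed {X : Type} (f : X -> X) u n : f u = u -> Nat.iter n f u = u.
Proof. intro H. induction n; simpl; auto. rewrite IHn; auto. Qed.

Theorem corollary3p21 (A : CstarAlg) (X : Type) (d : X -> X -> A)
  (HX : inhabited X) (Hd : is_cmetric A X d) (Hcomp : cm_complete d)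
  (T S : X -> X) (q : X -> X -> A) (delta : X -> X -> A)
  (Hq : forall x y, cpos_central (q x y) /\ 0 <= cnorm (q x y) < 1)
  (Hdelta : forall x y, cpos (delta x y))
  (Hcontr : forall (x y : X) (n : nat), (1 <= n)%nat ->
     cle (d (Nat.iter n T x) (Nat.iter n (fun z => S (T z)) y))
         (cmul (cpow (q x y) n) (delta x y)))
  (HT : orbitally_continuous d T)
  (HST : orbitally_continuous d (fun z => S (T z))) :
  exists u : X, T u = u /\ S u = u /\
    (forall v : X, T v = v -> S v = v -> v = u).
Proof.
  destruct HX as [x0].
  set (ST := fun z => S (T z)) in *.
  assert (Hbd : forall x y n, (1 <= n)%nat ->
            cnorm (d (Nat.iter n T x) (Nat.iter n ST y)) <= cnorm (q x y) ^ n * cnorm (delta x y)).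
  { intros x y n Hn. eapply Rle_trans; [apply (norm_mono _ _ (d_pos d Hd _ _) (Hcontr x y n Hn))|].
    eapply Rle_trans; [apply cnorm_mul|]. apply Rmult_le_compat_r; [apply cnorm_ge0| apply cpow_norm]. }
  set (q1 := cnorm (q x0 x0)). set (q2 := cnorm (q (T x0) x0)). set (r := Rmax q1 q2).
  assert (Hq1 : 0 <= q1 < 1) by apply Hq. assert (Hq2 : 0 <= q2 < 1) by apply Hq.
  assert (Hr : 0 <= r < 1). { unfold r. split. eapply Rle_trans; [apply Hq1|apply Rmax_l]. apply Rmax_lub_lt; lra. }
  assert (Hq1r : q1 <= r) by apply Rmax_l. assert (Hq2r : q2 <= r) by apply Rmax_r.
  set (c1 := cnorm (delta x0 x0)). set (c2 := cnorm (delta (T x0) x0)).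
  assert (Hc1 : 0 <= c1) by apply cnorm_ge0. assert (Hc2 : 0 <= c2) by apply cnorm_ge0.
  set (C := c1 + c2 + cnorm (d x0 (T x0))).
  assert (HC : 0 <= C). { unfold C. pose proof (cnorm_ge0 (d x0 (T x0))). lra. }
  set (xs := fun n => Nat.iter n T x0).
  assert (Hstep : forall n, cnorm (d (xs n) (xs (Datatypes.S n))) <= C * r ^ n).
  { intro n. destruct n as [|n].
    - simpl. unfold C. rewrite Rmult_1_r. lra.
    - eapply Rle_trans; [apply (d_tri d Hd _ (Nat.iter (Datatypes.S n) ST x0))|].
      pose proof (Hbd x0 x0 (Datatypes.S n) ltac:(lia)) as B1.
      pose proof (Hbd (T x0) x0 (Datatypes.S n) ltac:(lia)) as B2.
      rewrite (d_sym d Hd (Nat.iter (Datatypes.S n) ST x0)).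
      unfold xs. rewrite (Nat.iter_succ_r (Datatypes.S n)).
      pose proof (pow_incr q1 r (Datatypes.S n) (conj (proj1 Hq1) Hq1r)).
      pose proof (pow_incr q2 r (Datatypes.S n) (conj (proj1 Hq2) Hq2r)).
      fold q1 c1 in B1. fold q2 c2 in B2.
      pose proof (pow_le r (Datatypes.S n) (proj1 Hr)).
      assert (q1 ^ Datatypes.S n * c1 <= r ^ Datatypes.S n * c1) by (apply Rmult_le_compat_r; auto).
      assert (q2 ^ Datatypes.S n * c2 <= r ^ Datatypes.S n * c2) by (apply Rmult_le_compat_r; auto).
      pose proof (cnorm_ge0 (d x0 (T x0))).
      assert (r ^ Datatypes.S n * cnorm (d x0 (T x0)) >= 0) by (apply Rle_ge, Rmult_le_pos; auto).
      unfold C. nra. }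
  assert (Hdiff : forall (n p : nat), cnorm (d (xs n) (xs (p + n)%nat)) <= C * r ^ n * (1 - r ^ p) / (1 - r)).
  { intros n p. induction p.
    - simpl. replace (d (xs n) (xs n)) with (@czero A) by (symmetry; apply Hd; reflexivity).
      rewrite cnorm_0. right. field. lra.
    - eapply Rle_trans; [apply (d_tri d Hd _ (xs (p + n)%nat))|].
      eapply Rle_trans; [apply Rplus_le_compat; [apply IHp | apply (Hstep (p + n)%nat)]|].
      rewrite pow_add. right. simpl. field. lra. }
  assert (Hcauchy : cm_cauchy d xs).
  { intros eps He. destruct (geom_cv r (C / (1 - r)) Hr eps He) as [N HN].
    exists N. specialize (HN N (le_n _)). unfold R_dist in HN. rewrite Rminus_0_r in HN.
    assert (HCN : C / (1 - r) * r ^ N < eps).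
    { eapply Rle_lt_trans; [apply Rle_abs|exact HN]. }
    assert (G : forall n m, (n >= N)%nat -> (m >= n)%nat -> cnorm (d (xs n) (xs m)) < eps).
    { intros n m Hn Hm. replace m with ((m - n) + n)%nat by lia.
      eapply Rle_lt_trans; [apply Hdiff|].
      pose proof (pow_le r (m - n) (proj1 Hr)). pose proof (pow_le r n (proj1 Hr)).
      pose proof (pow_le_mono r n N ltac:(lra) Hn).
      assert (C * r ^ n * (1 - r ^ (m - n)) / (1 - r) <= C / (1 - r) * r ^ N).
      { unfold Rdiv. replace (C * / (1 - r) * r ^ N) with (C * r ^ N * / (1 - r)) by ring.
        apply Rmult_le_compat_r. left; apply Rinv_0_lt_compat; lra.
        assert (r ^ n * (1 - r ^ (m - n)) <= r ^ N).
        { assert (r ^ (m - n) <= 1) by (apply pow_le_1; lra). nra. }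
        rewrite Rmult_assoc. apply Rmult_le_compat_l; auto. }
      lra. }
    intros n m Hn Hm. destruct (Nat.le_ge_cases n m).
    - apply G; lia.
    - rewrite (d_sym d Hd). apply G; lia. }
  destruct (Hcomp xs Hcauchy) as [u Hu].
  unfold cm_converges in Hu.
  assert (HTu : T u = u).
  { pose proof (HT u x0 (fun i => i) (fun i => Nat.lt_succ_diag_r i) Hu) as H1. simpl in H1.
    pose proof (cv_shift _ Hu) as H2.
    exact (limit_unique d Hd (fun i => xs (Datatypes.S i)) (T u) u H1 H2). }
  set (ys := fun n => Nat.iter n ST x0).
  assert (Hy : Un_cv (fun n => cnorm (d (ys n) u)) 0).
  { apply (squeeze _ (fun n => c1 * r ^ n) (fun n => cnorm (d (xs n) u))).
    - intros n Hn. split. apply cnorm_ge0.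
      eapply Rle_trans; [apply (d_tri d Hd _ (xs n))|]. rewrite (d_sym d Hd (ys n)).
      pose proof (Hbd x0 x0 n Hn) as B. fold q1 c1 in B.
      pose proof (pow_incr q1 r n (conj (proj1 Hq1) Hq1r)).
      assert (q1 ^ n * c1 <= c1 * r ^ n) by (rewrite Rmult_comm; apply Rmult_le_compat_l; auto).
      unfold xs, ys. lra.
    - apply geom_cv; auto.
    - exact Hu. }
  assert (HSTu : ST u = u).
  { pose proof (HST u x0 (fun i => i) (fun i => Nat.lt_succ_diag_r i) Hy) as H1. simpl in H1.
    pose proof (cv_shift _ Hy) as H2.
    exact (limit_unique d Hd (fun i => ys (Datatypes.S i)) (ST u) u H1 H2). }
  assert (HSu : S u = u). { unfold ST in HSTu. rewrite HTu in HSTu. exact HSTu. }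
  exists u. split; [exact HTu|]. split; [exact HSu|].
  intros v HTv HSv.
  assert (HSTv : ST v = v) by (unfold ST; rewrite HTv; exact HSv).
  symmetry. apply (d_zero d Hd).
  apply (cv_zero_le _ (fun n => cnorm (delta u v) * cnorm (q u v) ^ n)).
  - apply geom_cv. apply Hq.
  - intros n Hn. split. apply cnorm_ge0.
    pose proof (Hbd u v n Hn) as B. rewrite (iter_fixed T u n HTu), (iter_fixed ST v n HSTv) in B.
    rewrite Rmult_comm. exact B.
Qed.
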